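(* For any non-negative integers $b$ and $c$, \[\binom{2b}{b}=\frac{1}{4^c}C(b,c)+\sum_{j=1}^c\frac{1}{4^j}C(b+1,j-1),\qquad 2\,C(b)=\frac{1}{4^c}C(b,c+1)+\sum_{j=1}^c\frac{1}{4^j}C(b+1,j).\]
   Context: $C(p,q)=\frac{(2p)!(2q)!}{p!(p+q)!q!}$ for non-negative integers $p,q$, and $C(b)=\frac{1}{b+1}\binom{2b}{b}$ is the $b$-th Catalan number. *)

(* Defs.v *)
From mathcomp Require Import all_boot all_order all_algebra.
Set Implicit Arguments. Unset Strict Implicit. Unset Printing Implicit Defensive.
Import Order.TTheory GRing.Theory Num.Theory.
Local Open Scope ring_scope.

Definition superCat (p q : nat) : rat :=
  ((2 * p)`!)%:R * ((2 * q)`!)%:R / ((p`!)%:R * ((p + q)`!)%:R * (q`!)%:R).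

Definition catalan (b : nat) : rat := ('C(2 * b, b))%:R / (b.+1)%:R.

(* Main.v *)
Require Import Defs.
From mathcomp Require Import all_boot all_order all_algebra.
From mathcomp Require Import ring lra.
Import Order.TTheory GRing.Theory Num.Theory.
Local Open Scope ring_scope.

Lemma fnz n : (n`!)%:R != 0 :> rat.
Proof. by rewrite pnatr_eq0 -lt0n fact_gt0. Qed.

Lemma key p q : 4 * superCat p q = superCat p.+1 q + superCat p q.+1.
Proof.
rewrite /superCat.
have -> : (2 * p.+1 = (2 * p).+2)%N by rewrite mulnS.
have -> : (2 * q.+1 = (2 * q).+2)%N by rewrite mulnS.
have -> : (p.+1 + q = (p + q).+1)%N by rewrite addSn.
have -> : (p + q.+1 = (p + q).+1)%N by rewrite addnS.
rewrite !factS !natrM.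
have := fnz p; have := fnz q; have := fnz (p+q).
have : (p+q).+1%:R != 0 :> rat by rewrite pnatr_eq0.
have : p.+1%:R != 0 :> rat by rewrite pnatr_eq0.
have : q.+1%:R != 0 :> rat by rewrite pnatr_eq0.
rewrite !mulrSr ?natrD /=.
move=> h1 h2 h3 h4 h5 h6. by field; rewrite h1 h2 h3 h4 h5 h6.
Qed.

Lemma binR b : ('C(2 * b, b))%:R = ((2 * b)`!)%:R / ((b`!)%:R * (b`!)%:R) :> rat.
Proof.
have hb : (b <= 2 * b)%N by rewrite mul2n -addnn leq_addr.
rewrite -(bin_fact hb) (_ : (2 * b - b = b)%N); last by rewrite mul2n -addnn addnK.
by rewrite !natrM mulfK // mulf_neq0 // fnz.
Qed.

Lemma step b c : superCat b c / 4 ^+ c =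
  superCat b c.+1 / 4 ^+ c.+1 + superCat b.+1 c / 4 ^+ c.+1.
Proof.
have e : superCat b c = (superCat b.+1 c + superCat b c.+1) / 4.
  by rewrite -key mulrC mulKf.
have h : (4:rat) ^+ c != 0 by rewrite expf_neq0.
by rewrite e exprS; field; rewrite h.
Qed.

Lemma step2 b c : superCat b c.+1 / 4 ^+ c =
  superCat b c.+2 / 4 ^+ c.+1 + superCat b.+1 c.+1 / 4 ^+ c.+1.
Proof.
have e : superCat b c.+1 = (superCat b.+1 c.+1 + superCat b c.+2) / 4.
  by rewrite -key mulrC mulKf.
have h : (4:rat) ^+ c != 0 by rewrite expf_neq0.
by rewrite e exprS; field; rewrite h.
Qed.

Theorem corollary8p9 (b c : nat) :
  ('C(2 * b, b))%:R =
    superCat b c / (4 ^+ c) + \sum_(1 <= j < c.+1) superCat b.+1 j.-1 / (4 ^+ j)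
  /\
  2 * catalan b =
    superCat b c.+1 / (4 ^+ c) + \sum_(1 <= j < c.+1) superCat b.+1 j / (4 ^+ j).
Proof.
split.
  elim: c => [|c IH].
    rewrite big_geq // addr0 expr0 divr1 binR /superCat addn0 muln0 fact0 mulr1.
    by rewrite mulr1.
  by rewrite IH [in RHS]big_nat_recr //= step; ring.
elim: c => [|c IH].
  rewrite big_geq // addr0 expr0 divr1 /catalan binR /superCat addn1 muln1.
  rewrite !factS fact0 !natrM.
  have := fnz b; have := fnz (2 * b).
  have : b.+1%:R != 0 :> rat by rewrite pnatr_eq0.
  move=> h1 h2 h3; field; by rewrite h3 /= addrC natr1 pnatr_eq0.
by rewrite IH [in RHS]big_nat_recr //= step2; ring.
Qed.
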